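(* Let $W=W_{\mathrm{aff}}\rtimes\Omega$ be an extended Coxeter group and let $1\to T\to G\to W\to1$ be a group extension of $W$ by an abelian group $T$ (written multiplicatively, with the $W$-action on $T$ induced by conjugation in $G$), together with a set-theoretic section $n:W\to G$ of $G\to W$ such that $n(ww')=n(w)n(w')$ whenever $\ell(ww')=\ell(w)+\ell(w')$. Let $\phi(w,w'):=n(w)n(w')n(ww')^{-1}\in T$. Then there is a unique $W$-equivariant group homomorphism $h:\mathbb Z[\mathfrak H]\to T$ with $h(\mathbf a_s)=n(s)^2$ for all $s\in S$, and \[ \phi(w,w')=h\big(\mathbb X(w,w')\big)\quad\text{for all } w,w'\in W. \]
   Context: For a Coxeter group $(W_{\mathrm{aff}},S)$ with length $\ell$, $\mathfrak H=\{vsv^{-1}:v\in W_{\mathrm{aff}},s\in S\}$ is the set of hyperplanes; for $v=s_1\cdots s_r$ reduced the hyperplanes separating $1$ and $v$ are $(s_1\cdots s_{i-1})s_i(s_1\cdots s_{i-1})^{-1}$, and $H$ separates $v_1,v_2$ iff $v_1^{-1}Hv_1$ separates $1$ and $v_1^{-1}v_2$. Extended Coxeter group: $W=W_{\mathrm{aff}}\rtimes\Omega$ with $(W_{\mathrm{aff}},S)$ Coxeter and $\Omega$ preserving $S$ by conjugation; $\ell(vu)=\ell(v)$ and $vu$ is identified with the chamber $v$ for questions of separation ($v\in W_{\mathrm{aff}},u\in\Omega$). $W$ acts on $\mathfrak H$ by conjugation, hence on the free abelian group $\mathbb Z[\mathfrak H]$ (written multiplicatively, generators $\mathbf a_H$).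 $\mathbb X(w,w')=\prod_H\mathbf a_H\in\mathbb Z[\mathfrak H]$, product over all $H\in\mathfrak H$ separating both $1$ from $w$ and $w$ from $ww'$. *)

(* Defs.v *)
From Stdlib Require Import List Arith.
Import ListNotations.

Set Implicit Arguments.

Record group := Group {
  gcar :> Type;
  gmul : gcar -> gcar -> gcar;
  gone : gcar;
  ginv : gcar -> gcar;
  gmulA : forall x y z, gmul x (gmul y z) = gmul (gmul x y) z;
  gmul1l : forall x, gmul gone x = x;
  gmul1r : forall x, gmul x gone = x;
  gmulVl : forall x, gmul (ginv x) x = gone;
  gmulVr : forall x, gmul x (ginv x) = gone
}.
Arguments gmul {g} _ _.
Arguments gone {g}.
Arguments ginv {g} _.

Fixpoint gpow {g : group} (x : g) (m : nat) : g :=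
  match m with O => gone | Datatypes.S k => gmul x (@gpow g x k) end.

Section Defs.
Variable W : group.

Definition prodl (l : list W) : W := fold_right gmul gone l.


Variable Sgen : W -> Prop.

Definition is_word (l : list W) (x : W) : Prop := Forall Sgen l /\ prodl l = x.

(* the subgroup W_aff generated by S (the generators are involutions) *)
Definition in_Waff (x : W) : Prop := exists l, is_word l x.

(* (W_aff, S) is a Coxeter system: the s in S are involutions different
   from 1, and W_aff = <S> has the presentation with generators S and
   relations (st)^m = 1 holding in W_aff (i.e. the Coxeter relations
   s^2 = 1, (st)^{m(s,t)} = 1), expressed by its universal property. *)
Definition coxeter : Prop :=
  (forall s, Sgen s -> s <> gone /\ gmul s s = gone) /\
  forall (H : group) (f : W -> H),
    (forall s, Sgen s -> gmul (f s) (f s) = gone) ->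
    (forall s t m, Sgen s -> Sgen t -> 0 < m -> gpow (gmul s t) m = gone ->
        gpow (gmul (f s) (f t)) m = gone) ->
    exists F : W -> H, (forall s, Sgen s -> F s = f s) /\
      (forall x y, in_Waff x -> in_Waff y -> F (gmul x y) = gmul (F x) (F y)).

Variable Omega : W -> Prop.

Definition extended_coxeter : Prop :=
  coxeter /\
  Omega gone /\
  (forall u v, Omega u -> Omega v -> Omega (gmul u v)) /\
  (forall u, Omega u -> Omega (ginv u)) /\
  (forall u s, Omega u -> Sgen s -> Sgen (gmul (gmul u s) (ginv u))) /\
  (forall w, exists v u, in_Waff v /\ Omega u /\ w = gmul v u) /\
  (forall u, in_Waff u -> Omega u -> u = gone).

Definition word_length (x : W) (m : nat) : Prop :=
  (exists l, is_word l x /\ length l = m) /\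
  (forall l, is_word l x -> m <= length l).

Definition ext_length (w : W) (m : nat) : Prop :=
  exists v u, in_Waff v /\ Omega u /\ w = gmul v u /\ word_length v m.

Definition hyperplane (H : W) : Prop :=
  exists v s, in_Waff v /\ Sgen s /\ H = gmul (gmul v s) (ginv v).

(* H separates 1 and w = v u (v in W_aff, u in Omega; w identified with the
   chamber v): for a reduced word v = s_1 ... s_r, H is one of
   (s_1...s_{i-1}) s_i (s_1...s_{i-1})^{-1}. *)
Definition sep1 (H w : W) : Prop :=
  exists v u l i, in_Waff v /\ Omega u /\ w = gmul v u /\
    is_word l v /\ word_length v (length l) /\ i < length l /\
    H = gmul (gmul (prodl (firstn i l)) (nth i l gone)) (ginv (prodl (firstn i l))).

Definition separates (H v1 v2 : W) : Prop :=
  sep1 (gmul (gmul (ginv v1) H) v1) (gmul (ginv v1) v2).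

End Defs.
Arguments prodl {W} l.
Arguments is_word {W} Sgen l x.
Arguments in_Waff {W} Sgen x.
Arguments coxeter {W} Sgen.
Arguments extended_coxeter {W} Sgen Omega.
Arguments word_length {W} Sgen x m.
Arguments ext_length {W} Sgen Omega w m.
Arguments hyperplane {W} Sgen H.
Arguments sep1 {W} Sgen Omega H w.
Arguments separates {W} Sgen Omega H v1 v2.

(* For an extension pi : G -> W with kernel T and section n, a function
   h on the hyperplanes (i.e. on the generators a_H of Z[H]) with values in
   T, W-equivariant (W acting on T through conjugation by n(w)), with
   h(a_s) = n(s)^2.  A homomorphism Z[H] -> T is the same as such a
   function on the free generators. *)
Definition equiv_hom {W G : group} (Sgen : W -> Prop) (pi : G -> W) (n : W -> G)
    (h : W -> G) : Prop :=
  (forall H, hyperplane Sgen H -> pi (h H) = gone) /\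
  (forall w H, hyperplane Sgen H ->
     h (gmul (gmul w H) (ginv w)) = gmul (gmul (n w) (h H)) (ginv (n w))) /\
  (forall s, Sgen s -> h s = gmul (n s) (n s)).

(* Main.v *)
Require Import Defs.
From Stdlib Require Import List Arith Lia Bool.
From Stdlib Require Import Classical ClassicalEpsilon FunctionalExtensionality.
Import ListNotations.

Arguments gmulA {g} x y z.
Arguments gmul1l {g} x.
Arguments gmul1r {g} x.
Arguments gmulVl {g} x.
Arguments gmulVr {g} x.

Section GroupLemmas.
Context {g : group}.
Implicit Types x y z : g.

Lemma mulA' x y z : gmul (gmul x y) z = gmul x (gmul y z).
Proof. symmetry; apply gmulA. Qed.
Lemma mulKV x y : gmul x (gmul (ginv x) y) = y.
Proof. rewrite gmulA, gmulVr, gmul1l; reflexivity. Qed.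
Lemma mulVK x y : gmul (ginv x) (gmul x y) = y.
Proof. rewrite gmulA, gmulVl, gmul1l; reflexivity. Qed.
Lemma mul_canl x y z : gmul x y = gmul x z -> y = z.
Proof. intro H. rewrite <- (mulVK x y), H, mulVK; reflexivity. Qed.
Lemma mul_canr x y z : gmul y x = gmul z x -> y = z.
Proof. intro H. rewrite <- (gmul1r y), <- (gmulVr x), gmulA, H, <- gmulA, gmulVr, gmul1r; reflexivity. Qed.
Lemma inv_uniq x y : gmul x y = gone -> y = ginv x.
Proof. intro H. apply (mul_canl x). rewrite H, gmulVr; reflexivity. Qed.
Lemma inv_mul x y : ginv (gmul x y) = gmul (ginv y) (ginv x).
Proof. symmetry; apply inv_uniq. rewrite mulA', mulKV, gmulVr; reflexivity. Qed.
Lemma inv_inv x : ginv (ginv x) = x.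
Proof. symmetry; apply inv_uniq, gmulVl. Qed.
Lemma inv_one : ginv (@gone g) = gone.
Proof. symmetry; apply inv_uniq, gmul1l. Qed.
End GroupLemmas.

Ltac gnorm := repeat (rewrite ?mulA', ?inv_mul, ?inv_inv, ?inv_one, ?gmul1l, ?gmul1r, ?gmulVr, ?gmulVl, ?mulKV, ?mulVK).

Definition conj {g : group} (x y : g) : g := gmul (gmul x y) (ginv x).

Lemma conj_mul {g : group} (x y z : g) : conj (gmul x y) z = conj x (conj y z).
Proof. unfold conj; gnorm; reflexivity. Qed.
Lemma conj_inj {g : group} (x y z : g) : conj x y = conj x z -> y = z.
Proof. unfold conj; intro H. apply mul_canr in H. apply mul_canl in H. exact H. Qed.
Lemma conjV {g : group} (x y : g) : conj (ginv x) (conj x y) = y.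
Proof. unfold conj; gnorm; reflexivity. Qed.
Lemma conjV' {g : group} (x y : g) : conj x (conj (ginv x) y) = y.
Proof. unfold conj; gnorm; reflexivity. Qed.
Lemma conj_eq {g : group} (x y z : g) : conj x y = z <-> y = conj (ginv x) z.
Proof. split; intro H; subst; [rewrite conjV|rewrite conjV']; reflexivity. Qed.


Definition eqc {T : Type} (x y : T) : bool :=
  if excluded_middle_informative (x = y) then true else false.
Lemma eqc_true {T} (x y : T) : eqc x y = true <-> x = y.
Proof. unfold eqc; destruct excluded_middle_informative; split; congruence. Qed.
Lemma eqc_refl {T} (x : T) : eqc x x = true.
Proof. apply eqc_true; reflexivity. Qed.
Lemma eqc_false {T} (x y : T) : eqc x y = false <-> x <> y.
Proof. unfold eqc; destruct excluded_middle_informative; split; congruence. Qed.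
Lemma eqc_iff {T U} (x y : T) (a b : U) : (x = y <-> a = b) -> eqc x y = eqc a b.
Proof. intro H. unfold eqc; do 2 destruct excluded_middle_informative; tauto. Qed.

Definition BoolG : group.
Proof.
  refine (@Group bool xorb false (fun b => b) _ _ _ _ _).
  - intros; rewrite xorb_assoc; reflexivity.
  - intros; apply xorb_false_l.
  - intros; apply xorb_false_r.
  - intros; apply xorb_nilpotent.
  - intros; apply xorb_nilpotent.
Defined.

Section SD.
Variable W : group.
Definition sd_mul (a b : W * (W -> bool)) : W * (W -> bool) :=
  (gmul (fst a) (fst b), fun t => xorb (snd a t) (snd b (conj (ginv (fst a)) t))).
Definition sd_inv (a : W * (W -> bool)) : W * (W -> bool) :=
  (ginv (fst a), fun t => snd a (conj (fst a) t)).
Definition sd_one : W * (W -> bool) := (gone, fun _ => false).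

Definition SDG : group.
Proof.
  refine (@Group (W * (W -> bool)) sd_mul sd_one sd_inv _ _ _ _ _).
  - intros [x a] [y b] [z c]; unfold sd_mul; simpl. f_equal; [apply gmulA|].
    apply functional_extensionality; intro t.
    rewrite xorb_assoc, inv_mul, conj_mul; reflexivity.
  - intros [x a]; unfold sd_mul, sd_one; simpl; f_equal; [apply gmul1l|].
    apply functional_extensionality; intro t. unfold conj; gnorm; reflexivity.
  - intros [x a]; unfold sd_mul, sd_one; simpl; f_equal; [apply gmul1r|].
    apply functional_extensionality; intro t. apply xorb_false_r.
  - intros [x a]; unfold sd_mul, sd_one, sd_inv; simpl; f_equal; [apply gmulVl|].
    apply functional_extensionality; intro t. rewrite inv_inv. apply xorb_nilpotent.
  - intros [x a]; unfold sd_mul, sd_one, sd_inv; simpl; f_equal; [apply gmulVr|].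
    apply functional_extensionality; intro t. rewrite conjV'. apply xorb_nilpotent.
Defined.
End SD.

Lemma prodl_app {g : group} (l1 l2 : list g) : prodl (l1 ++ l2) = gmul (prodl l1) (prodl l2).
Proof. induction l1; simpl. - rewrite gmul1l; reflexivity. - rewrite IHl1, gmulA; reflexivity. Qed.

Lemma gpow_add {g : group} (x : g) a b : gpow x (a + b) = gmul (gpow x a) (gpow x b).
Proof. induction a; simpl. - rewrite gmul1l; reflexivity. - rewrite IHa, gmulA; reflexivity. Qed.

Lemma min_exists (P : nat -> Prop) : (exists n, P n) -> exists n, P n /\ forall m, P m -> n <= m.
Proof.
  intros [n Hn]. revert Hn. induction n as [n IH] using lt_wf_ind. intro Hn.
  destruct (classic (exists m, P m /\ m < n)) as [[m [Hm Hlt]]|Hno].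
  - exact (IH m Hlt Hm).
  - exists n; split; auto. intros m Hm. destruct (le_lt_dec n m); auto. exfalso; eauto.
Qed.

Section Cox.
Variable W : group.
Variables Sgen Omega : W -> Prop.
Hypothesis HW : extended_coxeter Sgen Omega.

Lemma S_inv s : Sgen s -> gmul s s = gone.
Proof. intro Hs. destruct HW as [[H1 _] _]. apply H1, Hs. Qed.
Lemma S_ne1 s : Sgen s -> s <> gone.
Proof. intro Hs. destruct HW as [[H1 _] _]. apply H1, Hs. Qed.
Lemma S_inv' s : Sgen s -> ginv s = s.
Proof. intro Hs. symmetry. apply inv_uniq, S_inv, Hs. Qed.

Lemma Om1 : Omega gone. Proof. destruct HW as [_ [H _]]; exact H. Qed.
Lemma Om_mul u v : Omega u -> Omega v -> Omega (gmul u v).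
Proof. destruct HW as [_ [_ [H _]]]; apply H. Qed.
Lemma Om_inv u : Omega u -> Omega (ginv u).
Proof. destruct HW as [_ [_ [_ [H _]]]]; apply H. Qed.
Lemma Om_conjS u s : Omega u -> Sgen s -> Sgen (conj u s).
Proof. destruct HW as [_ [_ [_ [_ [H _]]]]]; apply H. Qed.
Lemma dec_ex w : exists v u, in_Waff Sgen v /\ Omega u /\ w = gmul v u.
Proof. destruct HW as [_ [_ [_ [_ [_ [H _]]]]]]; apply H. Qed.
Lemma Om_Waff u : in_Waff Sgen u -> Omega u -> u = gone.
Proof. destruct HW as [_ [_ [_ [_ [_ [_ H]]]]]]; apply H. Qed.

Lemma waff1 : in_Waff Sgen gone.
Proof. exists []; split; auto. Qed.
Lemma waffS s : Sgen s -> in_Waff Sgen s.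
Proof. intro; exists [s]; split; simpl; auto. apply gmul1r. Qed.
Lemma waff_mul x y : in_Waff Sgen x -> in_Waff Sgen y -> in_Waff Sgen (gmul x y).
Proof.
  intros [l1 [F1 P1]] [l2 [F2 P2]]. exists (l1 ++ l2); split.
  - apply Forall_app; auto.
  - rewrite prodl_app; subst; reflexivity.
Qed.
Lemma prodl_rev_inv l : Forall Sgen l -> prodl (rev l) = ginv (prodl l).
Proof.
  induction l; simpl; intros F. - rewrite inv_one; reflexivity.
  - inversion F; subst. rewrite prodl_app, IHl by auto. simpl. rewrite inv_mul, gmul1r, (S_inv' a) by auto. reflexivity.
Qed.
Lemma waff_inv x : in_Waff Sgen x -> in_Waff Sgen (ginv x).
Proof.
  intros [l [F P]]. exists (rev l); split.
  - apply Forall_rev; auto.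
  - subst; apply prodl_rev_inv; auto.
Qed.
Lemma word_waff l : Forall Sgen l -> in_Waff Sgen (prodl l).
Proof. intros; exists l; split; auto. Qed.

Lemma prodl_map_conj (u : W) l : prodl (map (conj u) l) = conj u (prodl l).
Proof.
  induction l; simpl. - unfold conj; gnorm; reflexivity.
  - rewrite IHl. unfold conj; gnorm; reflexivity.
Qed.
Lemma Om_conj_word u l : Omega u -> Forall Sgen l -> Forall Sgen (map (conj u) l).
Proof. intros Hu F. induction F; simpl; constructor; auto. apply Om_conjS; auto. Qed.
Lemma Om_conj_waff u x : Omega u -> in_Waff Sgen x -> in_Waff Sgen (conj u x).
Proof.
  intros Hu [l [F P]]. exists (map (conj u) l); split.
  - apply Om_conj_word; auto.
  - rewrite prodl_map_conj; subst; reflexivity.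
Qed.

Lemma dec_uniq v u v' u' : in_Waff Sgen v -> Omega u -> in_Waff Sgen v' -> Omega u' ->
  gmul v u = gmul v' u' -> v = v' /\ u = u'.
Proof.
  intros Hv Hu Hv' Hu' E.
  assert (E2 : gmul (ginv v') v = gmul u' (ginv u)).
  { apply (mul_canl v'). apply (mul_canr u). rewrite mulKV. gnorm. exact E. }
  assert (E3 : gmul (ginv v') v = gone).
  { apply Om_Waff. - apply waff_mul; auto; apply waff_inv; auto.
    - rewrite E2. apply Om_mul; auto; apply Om_inv; auto. }
  assert (v = v'). { apply (mul_canl (ginv v')). rewrite E3, gmulVl; reflexivity. }
  subst. split; auto. apply mul_canl in E; auto.
Qed.

Lemma cox_univ (H : group) (f : W -> H) :
    (forall s, Sgen s -> gmul (f s) (f s) = gone) ->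
    (forall s t m, Sgen s -> Sgen t -> 0 < m -> gpow (gmul s t) m = gone ->
        gpow (gmul (f s) (f t)) m = gone) ->
    exists F : W -> H, (forall l, Forall Sgen l -> F (prodl l) = prodl (map f l)) /\
      (forall x y, in_Waff Sgen x -> in_Waff Sgen y -> F (gmul x y) = gmul (F x) (F y)).
Proof.
  intros H1 H2. destruct HW as [[_ C] _]. destruct (C H f H1 H2) as [F [FS FM]].
  exists F; split; auto.
  assert (F1 : F gone = gone).
  { apply (mul_canl (F gone)). rewrite <- FM by apply waff1. rewrite gmul1l, gmul1r; reflexivity. }
  induction l; simpl; intro Fl. - exact F1.
  - inversion Fl; subst. rewrite FM, IHl, FS by (auto using waffS, word_waff). reflexivity.
Qed.

Lemma parity_word : forall l, Forall Sgen l -> forall l', Forall Sgen l' -> prodl l = prodl l' ->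
  Nat.odd (length l) = Nat.odd (length l').
Proof.
  destruct (cox_univ BoolG (fun _ => true)) as [F [FP _]].
  - intros; reflexivity.
  - intros s t m _ _ _ _. simpl. induction m; simpl; auto.
  - assert (Hp : forall l : list W, prodl (W:=BoolG) (map (fun _ => true) l) = Nat.odd (length l)).
    { intro l; induction l; simpl; auto. rewrite IHl. rewrite Nat.odd_succ, <- Nat.negb_odd. reflexivity. }
    intros l1 Fl l2 Fl2 E. rewrite <- !Hp, <- !FP by auto. rewrite E; reflexivity.
Qed.

Fixpoint Tl (l : list W) : list W :=
  match l with [] => [] | x :: l' => x :: map (conj x) (Tl l') end.
Definition xorl (l : list bool) : bool := fold_right xorb false l.
Definition Npar (l : list W) (t : W) : bool := xorl (map (eqc t) (Tl l)).

Lemma Tl_length l : length (Tl l) = length l.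
Proof. induction l; simpl; auto. rewrite length_map; auto. Qed.

Lemma Tl_nth l i : i < length l -> nth i (Tl l) gone = conj (prodl (firstn i l)) (nth i l gone).
Proof.
  revert i; induction l; simpl; intros i Hi. - lia.
  - destruct i; simpl. + unfold conj; gnorm; reflexivity.
    + rewrite nth_indep with (d' := conj a gone) by (rewrite length_map, Tl_length; lia).
      rewrite map_nth, IHl by lia. rewrite conj_mul; reflexivity.
Qed.

Lemma In_Tl_iff l H : In H (Tl l) <-> exists i, i < length l /\ H = conj (prodl (firstn i l)) (nth i l gone).
Proof.
  split.
  - intro Hin. destruct (In_nth _ _ gone Hin) as [i [Hi E]]. rewrite Tl_length in Hi.
    exists i; split; auto. rewrite <- E, Tl_nth; auto.
  - intros [i [Hi E]]. subst. rewrite <- Tl_nth by auto. apply nth_In. rewrite Tl_length; auto.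
Qed.

Lemma Tl_app1 l s : Tl (l ++ [s]) = Tl l ++ [conj (prodl l) s].
Proof.
  induction l; simpl. - unfold conj; gnorm; reflexivity.
  - rewrite IHl, map_app. simpl. rewrite conj_mul; reflexivity.
Qed.

Lemma Tl_map_conj u l : Tl (map (conj u) l) = map (conj u) (Tl l).
Proof.
  induction l; simpl; auto. rewrite IHl, !map_map. f_equal. apply map_ext; intro y.
  unfold conj; gnorm; reflexivity.
Qed.

Lemma In_Tl_split l x : In x (Tl l) -> exists l1 y l2, l = l1 ++ y :: l2 /\ x = conj (prodl l1) y.
Proof.
  revert x; induction l; simpl. - tauto.
  - intros x [E|Hin].
    + exists [], a, l; split; auto. simpl. subst. unfold conj; gnorm; reflexivity.
    + apply in_map_iff in Hin. destruct Hin as [x' [E Hin]].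
      destruct (IHl _ Hin) as [l1 [y [l2 [E1 E2]]]]. exists (a :: l1), y, l2; split.
      * subst; reflexivity.
      * subst. simpl. rewrite conj_mul; reflexivity.
Qed.

Lemma xorl_true_in (L : list W) (t : W) : xorl (map (eqc t) L) = true -> In t L.
Proof.
  induction L; simpl. - discriminate.
  - destruct (eqc t a) eqn:E. + rewrite eqc_true in E; auto.
    + rewrite xorb_false_l; auto.
Qed.
Lemma xorl_nodup (L : list W) (t : W) : NoDup L -> (xorl (map (eqc t) L) = true <-> In t L).
Proof.
  intro ND; split; [apply xorl_true_in|]. induction ND; simpl. - tauto.
  - intros [E|Hin].
    + subst. rewrite eqc_refl. assert (xorl (map (eqc t) l) = false).
      { destruct (xorl (map (eqc t) l)) eqn:E; auto. apply xorl_true_in in E. contradiction. }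
      rewrite H0; reflexivity.
    + rewrite IHND by auto. assert (eqc t x = false) by (apply eqc_false; intro; subst; contradiction).
      rewrite H0; reflexivity.
Qed.

Definition fsd (s : W) : SDG W := (s, fun t => eqc t s).

Lemma prodl_map_fsd l : prodl (map fsd l) = (prodl l, Npar l).
Proof.
  induction l as [|a l IHl]. - reflexivity.
  - change (prodl (map fsd (a::l))) with (gmul (fsd a) (prodl (map fsd l))).
    change (prodl (a::l)) with (gmul a (prodl l)).
    rewrite IHl. simpl. unfold sd_mul; simpl. f_equal. apply functional_extensionality; intro t.
    unfold Npar; simpl. f_equal. rewrite map_map. unfold xorl. f_equal. apply map_ext; intro y.
    apply eqc_iff. rewrite conj_eq, inv_inv. split; intro; subst; reflexivity.
Qed.

Section Braid.
Variables s t : W.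
Hypothesis Hs : Sgen s.
Hypothesis Ht : Sgen t.
Let gg := gmul s t.
Fixpoint Zs (k j0 : nat) (x : W) : bool :=
  match k with 0 => false | S k' => xorb (eqc x (gmul (gpow gg j0) s)) (Zs k' (S j0) x) end.

Lemma gpow_comm j : gmul gg (gpow gg j) = gmul (gpow gg j) gg.
Proof.
  change (gmul gg (gpow gg j)) with (gpow gg (1 + j)). rewrite Nat.add_comm, gpow_add.
  simpl. rewrite gmul1r; reflexivity.
Qed.

Lemma Zs_shift k j0 x : Zs k j0 (conj (ginv gg) x) = Zs k (S (S j0)) x.
Proof.
  revert j0; induction k; intro j0; simpl; auto. rewrite IHk. f_equal.
  apply eqc_iff. rewrite conj_eq, inv_inv. unfold conj.
  assert (E2 : gmul s (ginv gg) = gmul gg s).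
  { unfold gg. rewrite inv_mul, S_inv', (S_inv' s) by auto. gnorm. reflexivity. }
  assert (E3 : gmul (gmul gg (gmul (gpow gg j0) s)) (ginv gg) = gmul (gpow gg (S (S j0))) s).
  { simpl. rewrite !mulA', E2. rewrite <- (mulA' (gpow gg j0) gg s), <- gpow_comm. gnorm. reflexivity. }
  rewrite E3; tauto.
Qed.

Lemma gpow_fsd k : fst (gpow (gmul (fsd s) (fsd t)) k) = gpow gg k /\
   forall x, snd (gpow (gmul (fsd s) (fsd t)) k) x = Zs (2 * k) 0 x.
Proof.
  induction k as [|k [IH1 IH2]]. - split; reflexivity.
  - change (gpow (gmul (fsd s) (fsd t)) (S k)) with (gmul (gmul (fsd s) (fsd t)) (gpow (gmul (fsd s) (fsd t)) k)).
    destruct (gpow (gmul (fsd s) (fsd t)) k) as [a b]. simpl in IH1, IH2. subst a.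
    split. + reflexivity.
    + intro x. simpl. rewrite IH2. fold gg. rewrite Zs_shift. replace (k + S (k + 0)) with (S (k + (k + 0))) by lia. simpl. rewrite xorb_assoc. f_equal.
      * apply eqc_iff. rewrite gmul1l; tauto.
      * f_equal. apply eqc_iff. rewrite conj_eq, inv_inv. unfold conj, gg.
        rewrite (S_inv' s) by auto. gnorm. tauto.
Qed.

Lemma Zs_split a b j0 x : Zs (a + b) j0 x = xorb (Zs a j0 x) (Zs b (j0 + a) x).
Proof.
  revert j0; induction a; intro j0; simpl. - rewrite Nat.add_0_r; reflexivity.
  - rewrite IHa, xorb_assoc. do 3 f_equal. lia.
Qed.

Lemma Zs_period m k j0 x : gpow gg m = gone -> Zs k (m + j0) x = Zs k j0 x.
Proof.
  intro Hm. revert j0; induction k; intro j0; simpl; auto.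
  replace (S (m + j0)) with (m + S j0) by lia. rewrite IHk, gpow_add, Hm, gmul1l. reflexivity.
Qed.

Lemma braid_fsd m : 0 < m -> gpow (gmul s t) m = gone -> gpow (gmul (fsd s) (fsd t)) m = gone.
Proof.
  intros _ Hm. destruct (gpow_fsd m) as [E1 E2].
  destruct (gpow (gmul (fsd s) (fsd t)) m) as [a b] eqn:E. simpl in *. unfold gone; simpl; unfold sd_one.
  f_equal. - rewrite E1; exact Hm.
  - apply functional_extensionality; intro x. rewrite E2.
    assert (Hp : Zs m m x = Zs m 0 x) by (pose proof (Zs_period m m 0 x Hm) as P; rewrite Nat.add_0_r in P; exact P).
    rewrite Nat.add_0_r, Zs_split. simpl (0 + m). rewrite Hp. apply xorb_nilpotent.
Qed.
End Braid.

Lemma N_exists : exists N : W -> W -> bool,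
  (forall l, Forall Sgen l -> forall t, N (prodl l) t = Npar l t) /\
  (forall x y t, in_Waff Sgen x -> in_Waff Sgen y ->
      N (gmul x y) t = xorb (N x t) (N y (conj (ginv x) t))).
Proof.
  destruct (cox_univ (SDG W) fsd) as [F [FP FM]].
  - intros s Hs. unfold fsd; simpl; unfold sd_mul, sd_one; simpl. f_equal.
    + apply S_inv; auto.
    + apply functional_extensionality; intro t. rewrite (S_inv' s) by auto.
      replace (eqc (conj s t) s) with (eqc t s). apply xorb_nilpotent.
      apply eqc_iff. rewrite conj_eq, (S_inv' s) by auto. unfold conj. rewrite (S_inv' s), S_inv by auto. gnorm. tauto.
  - intros s t m Hs Ht Hm E. apply braid_fsd; auto.
  - assert (FF : forall x, in_Waff Sgen x -> F x = (x, snd (F x))).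
    { intros x [l [Fl E]]. subst. rewrite FP, prodl_map_fsd; auto. }
    exists (fun x => snd (F x)); split.
    + intros l Fl t. rewrite FP, prodl_map_fsd; auto.
    + intros x y t Hx Hy. rewrite FM by auto. rewrite (FF x Hx), (FF y Hy). reflexivity.
Qed.

Definition N : W -> W -> bool := proj1_sig (constructive_indefinite_description _ N_exists).
Lemma N_word l t : Forall Sgen l -> N (prodl l) t = Npar l t.
Proof. intro; unfold N; destruct constructive_indefinite_description as [N0 [H1 H2]]; simpl; auto. Qed.
Lemma N_cocycle x y t : in_Waff Sgen x -> in_Waff Sgen y ->
      N (gmul x y) t = xorb (N x t) (N y (conj (ginv x) t)).
Proof. intros; unfold N; destruct constructive_indefinite_description as [N0 [H1 H2]]; simpl; auto. Qed.

Lemma N_Om u v t : Omega u -> in_Waff Sgen v -> N (conj u v) t = N v (conj (ginv u) t).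
Proof.
  intros Hu [l [Fl E]]. subst. rewrite <- prodl_map_conj, !N_word by (auto using Om_conj_word).
  unfold Npar. rewrite Tl_map_conj, map_map. f_equal. apply map_ext; intro y.
  apply eqc_iff. rewrite conj_eq. rewrite inv_inv; tauto.
Qed.

Lemma N_S s t : Sgen s -> N s t = eqc t s.
Proof.
  intro Hs. replace s with (prodl [s]) at 1 by (simpl; apply gmul1r). rewrite N_word by auto.
  unfold Npar; simpl. apply xorb_false_r.
Qed.


Lemma NoDup_map_inj {A B} (f : A -> B) (l : list A) : (forall x y, f x = f y -> x = y) -> NoDup l -> NoDup (map f l).
Proof. intros Hf ND. apply NoDup_map_NoDup_ForallPairs; auto. intros x y _ _; apply Hf. Qed.

Definition reduced (l : list W) := Forall Sgen l /\ word_length Sgen (prodl l) (length l).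

Lemma wl_exists v : in_Waff Sgen v -> exists l, is_word Sgen l v /\ word_length Sgen v (length l).
Proof.
  intro Hv. destruct (min_exists (fun m => exists l, is_word Sgen l v /\ length l = m)) as [m [[l [Hl Hm]] Hmin]].
  - destruct Hv as [l Hl]. exists (length l), l; auto.
  - exists l; split; auto. split. + exists l; auto.
    + intros l' Hl'. subst. apply Hmin. exists l'; auto.
Qed.
Lemma wl_unique v m m' : word_length Sgen v m -> word_length Sgen v m' -> m = m'.
Proof.
  intros [[l [Hl E]] H1] [[l' [Hl' E']] H1']. subst.
  apply H1 in Hl'. apply H1' in Hl. lia.
Qed.
Lemma reduced_of l v : is_word Sgen l v -> word_length Sgen v (length l) -> reduced l.
Proof. intros [F E] Hw; subst; split; auto. Qed.

Lemma reduced_cons x l : reduced (x :: l) -> reduced l.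
Proof.
  intros [F [_ Hmin]]. inversion F; subst. split; auto. split.
  - exists l; split; [split|]; auto.
  - intros l' [F' E']. assert (Hw : is_word Sgen (x :: l') (prodl (x :: l))).
    { split; auto. simpl. rewrite E'; reflexivity. }
    apply Hmin in Hw. simpl in Hw. lia.
Qed.
Lemma reduced_app1 l s : reduced (l ++ [s]) -> reduced l /\ Sgen s.
Proof.
  intros [F [_ Hmin]]. apply Forall_app in F. destruct F as [F1 F2]. inversion F2; subst.
  split; auto. split; auto. split.
  - exists l; split; [split|]; auto.
  - intros l' [F' E']. assert (Hw : is_word Sgen (l' ++ [s]) (prodl (l ++ [s]))).
    { split. apply Forall_app; auto. rewrite !prodl_app, E'; reflexivity. }
    apply Hmin in Hw. rewrite !length_app in Hw. simpl in Hw. lia.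
Qed.

Lemma Tl_nodup l : reduced l -> NoDup (Tl l).
Proof.
  induction l as [|x l IH]; intro R; simpl. - constructor.
  - pose proof (reduced_cons _ _ R) as R'. constructor.
    + intro Hin. apply in_map_iff in Hin. destruct Hin as [y [E Hy]].
      assert (y = x). { apply (conj_inj x). rewrite E. unfold conj; gnorm; reflexivity. } subst y.
      destruct (In_Tl_split _ _ Hy) as [l1 [z [l2 [El Ex]]]].
      destruct R as [F [_ Hmin]].
      assert (Hw : is_word Sgen (l1 ++ l2) (prodl (x :: l))).
      { inversion F; subst. split.
        - apply Forall_app in H2. destruct H2 as [A B]. inversion B; subst. apply Forall_app; auto.
        - simpl. rewrite !prodl_app. simpl. unfold conj.
          apply Forall_app in H2. destruct H2 as [A B]. inversion B; subst.
          gnorm. rewrite (gmulA z z), S_inv, gmul1l by auto. reflexivity. }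
      apply Hmin in Hw. subst l. simpl in Hw. rewrite !length_app in Hw. simpl in Hw. lia.
    + apply NoDup_map_inj; [apply conj_inj|]. apply IH; auto.
Qed.

Lemma N_reduced l t : reduced l -> (N (prodl l) t = true <-> In t (Tl l)).
Proof. intro R. rewrite N_word by (apply R). apply xorl_nodup, Tl_nodup, R. Qed.

Lemma len_core b s m : in_Waff Sgen b -> Sgen s -> word_length Sgen b m ->
  (word_length Sgen (gmul b s) (S m) /\ N b (conj b s) = false) \/
  (exists m', m = S m' /\ word_length Sgen (gmul b s) m' /\ N b (conj b s) = true).
Proof.
  intros Hb Hs Hm.
  destruct (wl_exists (gmul b s)) as [l' [Hl' Hm']]; [apply waff_mul; auto using waffS|].
  destruct (wl_exists b Hb) as [l [Hl Hmb]].
  pose proof (wl_unique _ _ _ Hm Hmb) as Em. subst m.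
  assert (W1 : is_word Sgen (l ++ [s]) (gmul b s)).
  { destruct Hl as [F E]. split. apply Forall_app; auto. rewrite prodl_app, E; simpl; rewrite gmul1r; reflexivity. }
  assert (W2 : is_word Sgen (l' ++ [s]) b).
  { destruct Hl' as [F E]. split. apply Forall_app; auto. rewrite prodl_app, E; simpl; rewrite gmul1r.
    gnorm. rewrite S_inv, gmul1r by auto. reflexivity. }
  assert (L1 : length l' <= S (length l)).
  { destruct Hm' as [_ Hmin]. apply Hmin in W1. rewrite length_app in W1; simpl in W1; lia. }
  assert (L2 : length l <= S (length l')).
  { destruct Hmb as [_ Hmin]. apply Hmin in W2. rewrite length_app in W2; simpl in W2; lia. }
  assert (P : Nat.odd (length (l ++ [s])) = Nat.odd (length l')).
  { apply parity_word. apply W1. apply Hl'. destruct W1 as [_ E1]; destruct Hl' as [_ E2]; congruence. }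
  rewrite length_app in P. simpl in P.
  assert (Hc : length l' = S (length l) \/ length l = S (length l')).
  { destruct (Nat.lt_trichotomy (length l') (S (length l))) as [Hlt|[Heq|Hgt]]; auto; [|lia].
    destruct (Nat.eq_dec (length l) (S (length l'))); auto.
    assert (length l' = length l \/ S (length l') = length l) as [E|E] by lia.
    - rewrite E, Nat.add_1_r, Nat.odd_succ, <- Nat.negb_odd in P. destruct (Nat.odd (length l)); discriminate.
    - lia. }
  destruct Hc as [Hc|Hc].
  - left. split. + rewrite <- Hc; auto.
    + assert (R : reduced (l ++ [s])).
      { apply (reduced_of _ (gmul b s)); auto. rewrite length_app; simpl. rewrite Nat.add_1_r, <- Hc; auto. }
      assert (T1 : N (gmul b s) (conj b s) = true).
      { destruct W1 as [F1 E1]. rewrite <- E1. apply N_reduced; auto. rewrite Tl_app1. apply in_or_app; right.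
        destruct Hl as [_ E]. rewrite E. left; reflexivity. }
      rewrite N_cocycle in T1 by auto using waffS. rewrite (N_S s) in T1 by auto.
      rewrite conjV, eqc_refl in T1. destruct (N b (conj b s)); auto.
  - right. exists (length l'); split; auto. split; auto.
    assert (R : reduced (l' ++ [s])).
    { apply (reduced_of _ b); auto. rewrite length_app; simpl. rewrite Nat.add_1_r, <- Hc; auto. }
    destruct W2 as [F2 E2]. rewrite <- E2 at 1. apply N_reduced; auto. rewrite Tl_app1. apply in_or_app; right.
    destruct Hl' as [_ E]. rewrite E. left. unfold conj. gnorm. reflexivity.
Qed.


Lemma dec_ex' w : exists p : W * W, in_Waff Sgen (fst p) /\ Omega (snd p) /\ w = gmul (fst p) (snd p).
Proof. destruct (dec_ex w) as [v [u H]]. exists (v, u); exact H. Qed.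
Definition dec (w : W) : W * W := proj1_sig (constructive_indefinite_description _ (dec_ex' w)).
Lemma dec_spec w : in_Waff Sgen (fst (dec w)) /\ Omega (snd (dec w)) /\ w = gmul (fst (dec w)) (snd (dec w)).
Proof. unfold dec; destruct constructive_indefinite_description; simpl; auto. Qed.
Lemma dec_eq v u : in_Waff Sgen v -> Omega u -> dec (gmul v u) = (v, u).
Proof.
  intros Hv Hu. destruct (dec_spec (gmul v u)) as [H1 [H2 H3]].
  destruct (dec_uniq _ _ _ _ Hv Hu H1 H2 H3) as [E1 E2].
  destruct (dec (gmul v u)); simpl in *; subst; reflexivity.
Qed.

Definition Nw (w : W) : W -> bool := N (fst (dec w)).

Lemma ext_iff v u m : in_Waff Sgen v -> Omega u ->
  (ext_length Sgen Omega (gmul v u) m <-> word_length Sgen v m).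
Proof.
  intros Hv Hu; split.
  - intros [v' [u' [Hv' [Hu' [E Hl]]]]]. destruct (dec_uniq _ _ _ _ Hv Hu Hv' Hu' E); subst; auto.
  - intro Hl; exists v, u; auto.
Qed.
Lemma ext_waff v m : in_Waff Sgen v -> (ext_length Sgen Omega v m <-> word_length Sgen v m).
Proof.
  intro Hv. rewrite <- (gmul1r v) at 1. apply ext_iff; auto. apply Om1.
Qed.
Lemma ext_exists w : exists m, ext_length Sgen Omega w m.
Proof.
  destruct (dec_spec w) as [H1 [H2 H3]]. destruct (wl_exists _ H1) as [l [_ Hl]].
  exists (length l). rewrite H3. apply ext_iff; auto.
Qed.
Lemma ext_unique w m m' : ext_length Sgen Omega w m -> ext_length Sgen Omega w m' -> m = m'.
Proof.
  intros [v [u [Hv [Hu [E Hl]]]]] [v' [u' [Hv' [Hu' [E' Hl']]]]]. subst.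
  destruct (dec_uniq _ _ _ _ Hv Hu Hv' Hu' E'); subst. eapply wl_unique; eauto.
Qed.
Lemma ext_Om w u m : Omega u -> ext_length Sgen Omega w m -> ext_length Sgen Omega (gmul w u) m.
Proof.
  intros Hu [v [u' [Hv [Hu' [E Hl]]]]]. subst. exists v, (gmul u' u). 
  split; [auto|split; [apply Om_mul; auto|split; [apply mulA'|exact Hl]]].
Qed.
Lemma ext_Om0 u : Omega u -> ext_length Sgen Omega u 0.
Proof.
  intro Hu. rewrite <- (gmul1l u). apply ext_iff; auto using waff1. split.
  - exists []; split; [split|]; auto.
  - intros; lia.
Qed.
Lemma ext_S s : Sgen s -> ext_length Sgen Omega s 1.
Proof.
  intro Hs. apply ext_waff; auto using waffS. split.
  - exists [s]; split; [split|]; simpl; auto. apply gmul1r.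
  - intros l [F E]. destruct l; simpl; [|lia]. exfalso. apply (S_ne1 s); auto.
Qed.

Lemma len_W a s : Sgen s -> exists m, ext_length Sgen Omega a m /\
  ((ext_length Sgen Omega (gmul a s) (S m) /\ Nw a (conj a s) = false) \/
   (exists m', m = S m' /\ ext_length Sgen Omega (gmul a s) m' /\ Nw a (conj a s) = true)).
Proof.
  intro Hs. destruct (dec_spec a) as [Hv [Hu Ea]]. unfold Nw.
  set (v := fst (dec a)) in *. set (u := snd (dec a)) in *. clearbody v u.
  destruct (wl_exists _ Hv) as [l [_ Hl]].
  assert (Hs' : Sgen (conj u s)) by (apply Om_conjS; auto).
  assert (Eas : gmul a s = gmul (gmul v (conj u s)) u) by (subst; unfold conj; gnorm; reflexivity).
  assert (Ec : conj a s = conj v (conj u s)) by (subst; apply conj_mul).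
  exists (length l). rewrite Ea at 1. rewrite ext_iff by auto. split; auto.
  rewrite Eas, Ec.
  assert (Hvs : in_Waff Sgen (gmul v (conj u s))) by (apply waff_mul; auto using waffS).
  destruct (len_core v (conj u s) _ Hv Hs' Hl) as [[A B]|[m' [A [B C]]]].
  - left. rewrite ext_iff by auto. auto.
  - right. exists m'. rewrite ext_iff by auto. auto.
Qed.

Lemma Nw_cocycle x y t : Nw (gmul x y) t = xorb (Nw x t) (Nw y (conj (ginv x) t)).
Proof.
  unfold Nw. destruct (dec_spec x) as [Hv1 [Hu1 Ex]]. destruct (dec_spec y) as [Hv2 [Hu2 Ey]].
  set (v1 := fst (dec x)) in *. set (u1 := snd (dec x)) in *.
  set (v2 := fst (dec y)) in *. set (u2 := snd (dec y)) in *. clearbody v1 u1 v2 u2.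
  assert (E : gmul x y = gmul (gmul v1 (conj u1 v2)) (gmul u1 u2)) by (subst; unfold conj; gnorm; reflexivity).
  rewrite E, dec_eq; simpl.
  - rewrite N_cocycle by (auto using Om_conj_waff). rewrite N_Om by auto. f_equal. f_equal.
    subst x. rewrite inv_mul, conj_mul. reflexivity.
  - apply waff_mul; auto using Om_conj_waff.
  - apply Om_mul; auto.
Qed.

Lemma Nw_waff v t : in_Waff Sgen v -> Nw v t = N v t.
Proof. intro Hv. unfold Nw. rewrite <- (gmul1r v) at 1. rewrite dec_eq; auto using Om1. Qed.

Lemma sep1_iff H w : sep1 Sgen Omega H w <-> Nw w H = true.
Proof.
  split.
  - intros [v [u [l [i [Hv [Hu [E [Hl [Hlen [Hi EH]]]]]]]]]]. subst. unfold Nw. rewrite dec_eq by auto. simpl.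
    destruct Hl as [F E]. subst v. apply N_reduced. split; auto.
    apply In_Tl_iff. exists i; auto.
  - intro HN. destruct (dec_spec w) as [Hv [Hu Ew]]. unfold Nw in HN.
    destruct (wl_exists _ Hv) as [l [Hl Hlen]].
    assert (R : reduced l) by (apply (reduced_of _ _ Hl Hlen)).
    destruct Hl as [F El]. rewrite <- El in HN. apply N_reduced in HN; auto.
    apply In_Tl_iff in HN. destruct HN as [i [Hi EH]].
    exists (fst (dec w)), (snd (dec w)), l, i. split; [auto|split;[auto|split;[exact Ew|split;[split; auto|split;[exact Hlen|split; auto]]]]].
Qed.


Lemma hyp_conj w H : hyperplane Sgen H -> hyperplane Sgen (conj w H).
Proof.
  intros [P [s [HP [Hs E]]]]. destruct (dec_spec w) as [Hv [Hu Ew]].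
  exists (gmul (fst (dec w)) (conj (snd (dec w)) P)), (conj (snd (dec w)) s).
  split; [apply waff_mul; auto using Om_conj_waff|split; [apply Om_conjS; auto|]].
  change (gmul (gmul ?a ?b) (ginv ?a)) with (conj a b). subst H.
  set (v := fst (dec w)) in *. set (u := snd (dec w)) in *. clearbody v u. subst w.
  unfold conj; gnorm; reflexivity.
Qed.

Lemma Tl_hyp l x : Forall Sgen l -> In x (Tl l) -> hyperplane Sgen x.
Proof.
  intros F Hin. destruct (In_Tl_split _ _ Hin) as [l1 [y [l2 [E1 E2]]]]. subst.
  apply Forall_app in F. destruct F as [F1 F2]. inversion F2; subst.
  exists (prodl l1), y; split; [apply word_waff; auto|split; auto].
Qed.

Section Ext.
Variable G : group.
Variable pi : G -> W.
Hypothesis pi_mul : forall x y, pi (gmul x y) = gmul (pi x) (pi y).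
Hypothesis T_abelian : forall a b, pi a = gone -> pi b = gone -> gmul a b = gmul b a.
Variable n : W -> G.
Hypothesis n_sec : forall w, pi (n w) = w.
Hypothesis n_mul : forall w w' m m', ext_length Sgen Omega w m -> ext_length Sgen Omega w' m' ->
      ext_length Sgen Omega (gmul w w') (m + m') -> n (gmul w w') = gmul (n w) (n w').

Lemma pi_one : pi gone = gone.
Proof. apply (mul_canl (pi gone)). rewrite <- pi_mul, !gmul1r; reflexivity. Qed.
Lemma pi_inv x : pi (ginv x) = ginv (pi x).
Proof. apply inv_uniq. rewrite <- pi_mul, gmulVr. apply pi_one. Qed.

Lemma conj_T g1 g2 t : pi g1 = pi g2 -> pi t = gone -> conj g1 t = conj g2 t.
Proof.
  intros E Ht. set (tau := gmul (ginv g2) g1).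
  assert (Htau : pi tau = gone) by (unfold tau; rewrite pi_mul, pi_inv, E, gmulVl; reflexivity).
  assert (E1 : g1 = gmul g2 tau) by (unfold tau; gnorm; reflexivity).
  rewrite E1. unfold conj. gnorm. rewrite (gmulA tau t), (T_abelian tau t) by auto.
  gnorm. reflexivity.
Qed.

Lemma n_one : n gone = gone.
Proof.
  pose proof (n_mul gone gone 0 0 (ext_Om0 _ Om1) (ext_Om0 _ Om1)) as E.
  rewrite gmul1l in E. specialize (E (ext_Om0 _ Om1)).
  apply (mul_canl (n gone)). rewrite <- E, gmul1r. reflexivity.
Qed.

Lemma n_up a s m : Sgen s -> ext_length Sgen Omega a m -> ext_length Sgen Omega (gmul a s) (S m) ->
  n (gmul a s) = gmul (n a) (n s).
Proof. intros Hs H1 H2. apply (n_mul a s m 1); auto using ext_S. rewrite Nat.add_1_r; auto. Qed.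

Lemma K1a x s s' m : Sgen s -> Sgen s' -> conj x s = s' -> ext_length Sgen Omega x m ->
  ext_length Sgen Omega (gmul x s) (S m) -> conj (n x) (gmul (n s) (n s)) = gmul (n s') (n s').
Proof.
  intros Hs Hs' E H1 H2.
  assert (E2 : gmul x s = gmul s' x) by (subst; unfold conj; gnorm; reflexivity).
  assert (E3 : gmul (n x) (n s) = gmul (n s') (n x)).
  { rewrite <- (n_up x s m), <- (n_mul s' x 1 m); auto using ext_S. rewrite E2; reflexivity.
    rewrite <- E2; auto. }
  assert (E4 : conj (n x) (n s) = n s') by (unfold conj; rewrite E3; gnorm; reflexivity).
  rewrite <- E4. unfold conj. gnorm. reflexivity.
Qed.

Lemma K1 x s s' : Sgen s -> Sgen s' -> conj x s = s' -> conj (n x) (gmul (n s) (n s)) = gmul (n s') (n s').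
Proof.
  intros Hs Hs' E. destruct (len_W x s Hs) as [m [Hm [[A _]|[m' [Em [A _]]]]]].
  - eapply K1a; eauto.
  - set (y := gmul x s) in *.
    assert (Ey : gmul y s = x) by (unfold y; gnorm; rewrite S_inv, gmul1r; auto).
    assert (Cy : conj y s = s'). { rewrite <- E; unfold y, conj; gnorm. reflexivity. }
    assert (Hys : ext_length Sgen Omega (gmul y s) (S m')) by (rewrite Ey, <- Em; auto).
    pose proof (K1a y s s' m' Hs Hs' Cy A Hys) as K.
    rewrite <- Ey, (n_up y s m'); auto. rewrite conj_mul. rewrite <- K. f_equal.
    unfold conj; gnorm; reflexivity.
Qed.

Lemma WD v s v' s' : Sgen s -> Sgen s' -> conj v s = conj v' s' ->
  conj (n v) (gmul (n s) (n s)) = conj (n v') (gmul (n s') (n s')).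
Proof.
  intros Hs Hs' E. set (x := gmul (ginv v') v).
  assert (Cx : conj x s = s') by (unfold x; rewrite conj_mul, E, conjV; reflexivity).
  rewrite (conj_T (n v) (gmul (n v') (n x))).
  - rewrite conj_mul, (K1 x s s'); auto.
  - rewrite pi_mul, !n_sec. unfold x. gnorm; reflexivity.
  - rewrite pi_mul, n_sec, S_inv; auto.
Qed.

Definition hh (H : W) : G :=
  let p := epsilon (inhabits (gone, gone)) (fun p : W * W => Sgen (snd p) /\ H = conj (fst p) (snd p)) in
  conj (n (fst p)) (gmul (n (snd p)) (n (snd p))).

Lemma hh_spec v s : Sgen s -> hh (conj v s) = conj (n v) (gmul (n s) (n s)).
Proof.
  intro Hs. unfold hh.
  destruct (epsilon_spec (inhabits (gone, gone)) (fun p : W * W => Sgen (snd p) /\ conj v s = conj (fst p) (snd p)))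
    as [H1 H2].
  - exists (v, s); auto.
  - apply WD; auto.
Qed.

Lemma hh_equiv : equiv_hom Sgen pi n hh.
Proof.
  split; [|split].
  - intros H [v [s [Hv [Hs E]]]]. subst H. change (gmul (gmul v s) (ginv v)) with (conj v s). rewrite hh_spec by auto. unfold conj.
    rewrite !pi_mul, pi_inv, !n_sec, S_inv by auto. gnorm; reflexivity.
  - intros w H [v [s [Hv [Hs E]]]]. subst H. change (gmul (gmul v s) (ginv v)) with (conj v s). change (gmul (gmul w (conj v s)) (ginv w)) with (conj w (conj v s)).
    rewrite <- conj_mul, !hh_spec by auto.
    change (gmul (gmul (n w) ?b) (ginv (n w))) with (conj (n w) b). rewrite <- conj_mul.
    apply conj_T. + rewrite pi_mul, !n_sec; reflexivity.
    + rewrite pi_mul, n_sec, S_inv; auto.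
  - intros s Hs. replace s with (conj gone s) at 1 by (unfold conj; gnorm; reflexivity).
    rewrite hh_spec, n_one by auto. unfold conj; gnorm; reflexivity.
Qed.

Lemma hh_unique h' : equiv_hom Sgen pi n h' -> forall H, hyperplane Sgen H -> h' H = hh H.
Proof.
  intros [_ [Heq Hs]] H [v [s [Hv [Hs' E]]]]. subst H.
  assert (Hy : hyperplane Sgen s).
  { exists gone, s. split; auto using waff1. split; auto. gnorm; reflexivity. }
  rewrite (Heq v s Hy), Hs by auto. change (gmul (gmul v s) (ginv v)) with (conj v s).
  rewrite hh_spec by auto. reflexivity.
Qed.

Lemma phi_step a s : Sgen s ->
  gmul (gmul (n a) (n s)) (ginv (n (gmul a s))) =
  if Nw a (conj a s) then hh (conj a s) else gone.
Proof.
  intro Hs. destruct (len_W a s Hs) as [m [Hm [[A B]|[m' [Em [A B]]]]]]; rewrite B.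
  - rewrite (n_up a s m); auto. gnorm; reflexivity.
  - assert (Ea : gmul (gmul a s) s = a) by (gnorm; rewrite S_inv, gmul1r; auto).
    assert (Hn : n a = gmul (n (gmul a s)) (n s)).
    { rewrite <- Ea at 1. apply (n_up _ _ m'); auto. rewrite Ea, <- Em; auto. }
    rewrite Hn. replace (conj a s) with (conj (gmul a s) s) by (unfold conj; gnorm; reflexivity).
    rewrite hh_spec by auto. unfold conj; gnorm; reflexivity.
Qed.


Lemma Nw_P_false l s : reduced (l ++ [s]) -> Nw (prodl l) (conj (prodl l) s) = false.
Proof.
  intro R. destruct (reduced_app1 _ _ R) as [[Fl Hl] Hs].
  destruct (len_W (prodl l) s Hs) as [m [Hm [[A B]|[m' [Em [A B]]]]]]; auto.
  exfalso. destruct R as [F Hw].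
  assert (Hm0 : ext_length Sgen Omega (prodl l) (length l)) by (apply ext_waff; auto using word_waff).
  rewrite (ext_unique _ _ _ Hm Hm0) in Em.
  assert (E : gmul (prodl l) s = prodl (l ++ [s])) by (rewrite prodl_app; simpl; rewrite gmul1r; reflexivity).
  rewrite E in A. rewrite ext_waff in A by (apply word_waff; auto).
  pose proof (wl_unique _ _ _ A Hw) as X. rewrite length_app in X; simpl in X. lia.
Qed.

Lemma main_ind l : reduced l -> forall w,
  gmul (gmul (n w) (n (prodl l))) (ginv (n (gmul w (prodl l)))) =
  prodl (map hh (filter (Nw w) (map (conj w) (Tl l)))).
Proof.
  induction l as [|s l IH] using rev_ind; intros R w.
  - simpl. rewrite n_one, gmul1r, gmul1r, gmulVr. reflexivity.
  - destruct (reduced_app1 _ _ R) as [R' Hs]. specialize (IH R' w).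
    set (P := prodl l) in *.
    assert (EP : prodl (l ++ [s]) = gmul P s) by (rewrite prodl_app; simpl; rewrite gmul1r; reflexivity).
    assert (H1 : ext_length Sgen Omega P (length l)) by (apply ext_waff; [apply word_waff, R'|apply R']).
    assert (H2 : ext_length Sgen Omega (gmul P s) (S (length l))).
    { rewrite <- EP. apply ext_waff; [apply word_waff, R|]. destruct R as [_ Hw].
      rewrite length_app, Nat.add_1_r in Hw. exact Hw. }
    rewrite EP, (n_up P s (length l)) by auto.
    rewrite Tl_app1, map_app, filter_app, map_app, prodl_app. rewrite <- IH.
    fold P. simpl.
    assert (Er : conj w (conj P s) = conj (gmul w P) s) by (rewrite conj_mul; reflexivity).
    assert (EN : Nw w (conj w (conj P s)) = Nw (gmul w P) (conj (gmul w P) s)).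
    { rewrite <- Er, Nw_cocycle, conjV. unfold P. rewrite Nw_P_false; auto. rewrite xorb_false_r; reflexivity. }
    rewrite EN, Er.
    pose proof (phi_step (gmul w P) s Hs) as PS.
    replace (gmul w (gmul P s)) with (gmul (gmul w P) s) by (gnorm; reflexivity).
    destruct (Nw (gmul w P) (conj (gmul w P) s)) eqn:EB; simpl.
    + rewrite gmul1r, <- PS. gnorm. reflexivity.
    + rewrite <- PS. gnorm. reflexivity.
Qed.


Lemma final_conc : exists h : W -> G,
    equiv_hom Sgen pi n h /\
    (forall h', equiv_hom Sgen pi n h' -> forall H, hyperplane Sgen H -> h' H = h H) /\
    (forall w w', exists L : list W,
        NoDup L /\
        (forall H, In H L <->
           hyperplane Sgen H /\ separates Sgen Omega H gone w /\
           separates Sgen Omega H w (gmul w w')) /\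
        gmul (gmul (n w) (n w')) (ginv (n (gmul w w'))) = prodl (map h L)).
Proof.
  exists hh. split; [apply hh_equiv|split; [apply hh_unique|]].
  intros w w'.
  destruct (dec_spec w') as [Hv' [Hu' Ew']].
  set (v' := fst (dec w')) in *. set (u' := snd (dec w')) in *. clearbody v' u'. subst w'.
  destruct (wl_exists v' Hv') as [l [Hl Hlen]].
  assert (R : reduced l) by (apply (reduced_of _ _ Hl Hlen)).
  destruct Hl as [Fl El].
  exists (filter (Nw w) (map (conj w) (Tl l))).
  split; [|split].
  - apply NoDup_filter, NoDup_map_inj; [apply conj_inj|apply Tl_nodup, R].
  - intro H. rewrite filter_In. unfold separates.
    rewrite inv_one, gmul1l, gmul1r, gmul1l.
    replace (gmul (gmul (ginv w) H) w) with (conj (ginv w) H) by (unfold conj; rewrite inv_inv; reflexivity).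
    rewrite mulVK, !sep1_iff.
    unfold Nw. rewrite (dec_eq v' u') by auto. simpl. rewrite <- El, N_reduced by auto.
    assert (Hm : In H (map (conj w) (Tl l)) <-> In (conj (ginv w) H) (Tl l)).
    { rewrite in_map_iff. split.
      - intros [x [E Hx]]. subst H. rewrite conjV; auto.
      - intro Hx. exists (conj (ginv w) H). split; auto. apply conjV'. }
    rewrite Hm. split.
    + intros [A B]. split; [|split; auto].
      rewrite <- (conjV' w H). apply hyp_conj. apply (Tl_hyp l); auto.
    + intros [_ [A B]]. split; auto.
  - assert (E1 : n (gmul v' u') = gmul (n v') (n u')).
    { apply (n_mul v' u' (length l) 0).
      - apply ext_waff; auto.
      - apply ext_Om0; auto.
      - rewrite Nat.add_0_r. apply ext_iff; auto. }
    destruct (ext_exists (gmul w v')) as [k Hk].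
    assert (E2 : n (gmul w (gmul v' u')) = gmul (n (gmul w v')) (n u')).
    { rewrite gmulA. apply (n_mul _ u' k 0); auto using ext_Om0.
      rewrite Nat.add_0_r. apply ext_Om; auto. }
    rewrite E1, E2. rewrite <- main_ind by exact R. rewrite El. gnorm. reflexivity.
Qed.

End Ext.
End Cox.

Theorem lemma2p8p2 (W G : group) (Sgen Omega : W -> Prop)
  (HW : extended_coxeter Sgen Omega)
  (pi : G -> W)
  (pi_mul : forall x y, pi (gmul x y) = gmul (pi x) (pi y))
  (pi_surj : forall w, exists g, pi g = w)
  (T_abelian : forall a b, pi a = gone -> pi b = gone -> gmul a b = gmul b a)
  (n : W -> G)
  (n_sec : forall w, pi (n w) = w)
  (n_mul : forall w w' m m', ext_length Sgen Omega w m -> ext_length Sgen Omega w' m' ->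
      ext_length Sgen Omega (gmul w w') (m + m') -> n (gmul w w') = gmul (n w) (n w')) :
  exists h : W -> G,
    equiv_hom Sgen pi n h /\
    (forall h', equiv_hom Sgen pi n h' -> forall H, hyperplane Sgen H -> h' H = h H) /\
    (forall w w', exists L : list W,
        NoDup L /\
        (forall H, In H L <->
           hyperplane Sgen H /\ separates Sgen Omega H gone w /\
           separates Sgen Omega H w (gmul w w')) /\
        gmul (gmul (n w) (n w')) (ginv (n (gmul w w'))) = prodl (map h L)).
Proof.
  eapply final_conc; eauto.
Qed.
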